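(* Let $k\ge2$, $n\ge1$ be integers, let $\bar{\mathcal{P}}\in\mathbb{R}^{[k,n]}$ be a columnwise-substochastic tensor, $\mathbf{v}\in\mathbb{R}^n$ a stochastic vector and $\alpha\in[0,1)$. Let $\Delta:=\{\mathbf{y}\in\mathbb{R}^n_+:\mathbf{e}^T\mathbf{y}\le(1-\alpha)^{-\frac{1}{k-1}}\}$ and let $\mathbf{y}_c\in\Delta$. Then the equation $(\mathbf{e}^T\mathbf{y}_{c+1})^{k-2}\mathbf{y}_{c+1}=\alpha\bar{\mathcal{P}}\mathbf{y}_c^{k-1}+\mathbf{v}$ in the unknown $\mathbf{y}_{c+1}$ has the closed-form solution $$\mathbf{y}_{c+1}=\left(1+\alpha\mathbf{e}^T(\bar{\mathcal{P}}\mathbf{y}_c^{k-1})\right)^{-\frac{k-2}{k-1}}\left(\alpha\bar{\mathcal{P}}\mathbf{y}_c^{k-1}+\mathbf{v}\right)\in\Delta,$$ which is exactly $\mathbf{y}_{c+1}=\Phi(\mathbf{y}_c)$, where $\Phi(\mathbf{y}):=(1+\alpha\mathbf{e}^T(\bar{\mathcal{P}}\mathbf{y}^{k-1}))^{-\frac{k-2}{k-1}}(\mathbf{v}+\alpha\bar{\mathcal{P}}\mathbf{y}^{k-1})$.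
   Context: For $\mathcal{P}\in\mathbb{R}^{[k,n]}$ (real tensors of order $k$, dimension $n$) and $\mathbf{y}\in\mathbb{R}^n$, $(\mathcal{P}\mathbf{y}^{k-1})_i=\sum_{i_2,\dots,i_k}p_{i i_2\dots i_k}y_{i_2}\cdots y_{i_k}$. $\bar{\mathcal{P}}$ is columnwise-substochastic if its entries are nonnegative and $\sum_{i}\bar p_{i i_2\dots i_k}\le1$ for all $i_2,\dots,i_k$. $\mathbf{e}$ is the all-ones vector; a stochastic vector is nonnegative with entries summing to $1$. The left-hand side $(\mathbf{e}^T\mathbf{y})^{k-2}\mathbf{y}$ equals $(I\circ\mathbf{e}^{\circ(k-2)})\mathbf{y}^{k-1}$, where $I\circ\mathbf{e}^{\circ(k-2)}$ is the tensor with entries $\delta_{i_1i_2}$. *)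

(* Defs.v *)
From HB Require Import structures.
From mathcomp Require Import all_boot all_order all_algebra.
From mathcomp Require Import reals exp.
Set Implicit Arguments. Unset Strict Implicit. Unset Printing Implicit Defensive.
Import Order.TTheory GRing.Theory Num.Theory.
Local Open Scope ring_scope.

(* A real tensor of order k and dimension n: entry p_{i i_2 ... i_k} is
   [P i j] where j : {ffun 'I_k.-1 -> 'I_n} lists (i_2,...,i_k). *)
Definition tensor (R : realType) (k n : nat) :=
  'I_n -> {ffun 'I_k.-1 -> 'I_n} -> R.

Definition tapply (R : realType) (k n : nat) (P : tensor R k n)
  (y : 'I_n -> R) : 'I_n -> R :=
  fun i => \sum_(j : {ffun 'I_k.-1 -> 'I_n}) P i j * \prod_(t < k.-1) y (j t).

Definition esum (R : realType) (n : nat) (y : 'I_n -> R) : R :=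
  \sum_(i < n) y i.

Definition col_substochastic (R : realType) (k n : nat) (P : tensor R k n) :=
  (forall i j, 0 <= P i j) /\ (forall j, \sum_(i < n) P i j <= 1).

Definition stochastic (R : realType) (n : nat) (v : 'I_n -> R) :=
  (forall i, 0 <= v i) /\ esum v = 1.

Definition Delta (R : realType) (k n : nat) (alpha : R) (y : 'I_n -> R) :=
  (forall i, 0 <= y i) /\
  esum y <= powR (1 - alpha) (- (1 / (k.-1)%:R)).

Definition Phi (R : realType) (k n : nat) (P : tensor R k n) (v : 'I_n -> R)
  (alpha : R) (y : 'I_n -> R) : 'I_n -> R :=
  fun i => powR (1 + alpha * esum (tapply P y)) (- ((k - 2)%:R / (k.-1)%:R))
           * (v i + alpha * tapply P y i).

(* Main.v *)
Require Import Defs.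
From HB Require Import structures.
From mathcomp Require Import all_boot all_order all_algebra.
From mathcomp Require Import reals exp.
From mathcomp Require Import ring lra.
From mathcomp Require Import boolp.
Import Order.TTheory GRing.Theory Num.Theory.
Local Open Scope ring_scope.

Theorem lemma4p1 (R : realType) (k n : nat) (hk : (2 <= k)%N) (hn : (1 <= n)%N)
  (P : tensor R k n) (v : 'I_n -> R) (alpha : R)
  (hP : col_substochastic P) (hv : stochastic v)
  (ha0 : 0 <= alpha) (ha1 : alpha < 1)
  (yc : 'I_n -> R) (hyc : Delta k alpha yc) :
  let ynext : 'I_n -> R := fun i =>
    powR (1 + alpha * esum (tapply P yc)) (- ((k - 2)%:R / (k - 1)%:R))
    * (alpha * tapply P yc i + v i) in
  (forall i, esum ynext ^+ (k - 2) * ynext i = alpha * tapply P yc i + v i)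
  /\ Delta k alpha ynext
  /\ ynext = Phi P v alpha yc.
Proof.
case: k hk P hP hyc => [|[|m]] // _ P hP hyc ynext.
have -> : (m.+2 - 2 = m)%N by rewrite subn2.
case: hP => P0 P1; case: hv => v0 v1; case: hyc => y0 yle.
rewrite /= in yle.
set t := tapply P yc.
set s := esum t.
have t0 : forall i, 0 <= t i.
  move=> i; apply: sumr_ge0 => j _; apply: mulr_ge0 => //.
  by apply: prodr_ge0 => ? _.
have s0 : 0 <= s by apply: sumr_ge0.
have ey0 : 0 <= esum yc by apply: sumr_ge0.
have sle : s <= esum yc ^+ m.+1.
  rewrite /s /esum /t /tapply exchange_big /=.
  have -> : esum yc ^+ m.+1 = \prod_(i < m.+1) \sum_(j < n) yc j.
    by rewrite prodr_const card_ord.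
  rewrite bigA_distr_bigA; apply: ler_sum => j _.
  rewrite -mulr_suml; apply: ler_piMl => //.
  by apply: prodr_ge0 => ? _.
set S := 1 + alpha * s.
have S1 : 1 <= S by rewrite /S lerDl; apply: mulr_ge0.
have S0 : 0 < S by apply: lt_le_trans S1.
have mR : (m.+1%:R : R) != 0 by rewrite pnatr_eq0.
set u := S `^ (1 / m.+1%:R).
have u0 : 0 < u by apply: powR_gt0.
have Su : S = u ^+ m.+1.
  rewrite /u -powR_mulrn; last exact: ltW.
  by rewrite -powRrM mul1r mulVf // powRr1 // ltW.
have cu : S `^ (- ((m.+2 - 2)%:R / (m.+2 - 1)%:R)) = u ^- m.
  rewrite subn2 subn1 /=.
  rewrite /u -powR_invn; last exact: ltW.
  rewrite -powRrM; congr (S `^ _).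
  by rewrite mulrN mul1r mulrC.
have ex : esum (fun i => alpha * t i + v i) = S.
  rewrite /esum big_split /= -mulr_sumr; rewrite /esum in v1; rewrite v1 /S addrC.
  by [].
have eyn : esum ynext = u.
  rewrite /esum /ynext -mulr_sumr.
  have -> : \sum_(i < n) (alpha * tapply P yc i + v i) = S by exact: ex.
  rewrite cu Su exprS mulrA mulrC mulrA mulrV ?mul1r //.
  by rewrite unitfE expf_neq0 // gt_eqF.
split.
  move=> i; rewrite eyn /ynext cu mulrA mulrV ?mul1r //.
  by rewrite unitfE expf_neq0 // gt_eqF.
split.
  split.
    move=> i; apply: mulr_ge0; first exact: powR_ge0.
    by apply: addr_ge0; [apply: mulr_ge0|].
  rewrite eyn /u /=.
  have a1 : 0 < 1 - alpha by lra.
  have -> : (1 - alpha) `^ (- (1 / m.+1%:R)) = ((1 - alpha)^-1) `^ (1 / m.+1%:R).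
    by rewrite -(powR_inv1 (ltW a1)) -powRrM mulN1r.
  apply: ge0_ler_powR; rewrite ?nnegrE; last first.
  all: try by [rewrite invr_ge0 ltW | exact: ltW | rewrite divr_ge0].
  set w := (1 - alpha) `^ (- (1 / m.+1%:R)) in yle.
  have w0 : 0 <= w by apply: powR_ge0.
  have wm : w ^+ m.+1 = (1 - alpha)^-1.
    rewrite /w -powR_mulrn ?powR_ge0 // -powRrM mulNr mul1r mulVf //.
    by rewrite powR_inv1 ?ltW.
  have : s <= (1 - alpha)^-1.
    by apply: (le_trans sle); rewrite -wm lerXn2r // nnegrE.
  move=> hs.
  have -> : (1 - alpha)^-1 = 1 + alpha * (1 - alpha)^-1.
    by field; rewrite gt_eqF.
  rewrite /S.
  rewrite lerD2l; apply: ler_wpM2l => //.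
apply/funext => i; rewrite /ynext /Phi subn1 [v i + _]addrC.
reflexivity.
Qed.
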